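(* Let $R$ be a commutative Noetherian ring of prime characteristic $p$ and let $G$ be an $x$-torsion-free left $R[x,f]$-module. Then there is a radical ideal $\mathfrak{b}$ of $R$ such that $\operatorname{grann}_{R[x,f]}G=\mathfrak{b}R[x,f]=\bigoplus_{n\ge0}\mathfrak{b}x^n$.
   Context: $R[x,f]$ is the Frobenius skew polynomial ring: free left $R$-module on $(x^i)_{i\ge0}$, with $xr=r^px$. $G$ is $x$-torsion-free if $xg=0$ implies $g=0$. $\operatorname{grann}_{R[x,f]}G$ is the set of $\sum r_ix^i\in R[x,f]$ such that each $r_ix^i$ annihilates $G$. *)

(* Defs.v *)
From HB Require Import structures.
From mathcomp Require Import all_boot all_order all_algebra.
Set Implicit Arguments. Unset Strict Implicit. Unset Printing Implicit Defensive.
Import GRing.Theory.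
Local Open Scope ring_scope.

Definition is_ideal (R : comNzRingType) (I : R -> Prop) : Prop :=
  [/\ I 0, (forall a b, I a -> I b -> I (a + b)) & (forall r a, I a -> I (r * a))].

Definition is_radical_ideal (R : comNzRingType) (I : R -> Prop) : Prop :=
  is_ideal I /\ (forall (a : R) (n : nat), I (a ^+ n.+1) -> I a).

Definition noetherian_ring (R : comNzRingType) : Prop :=
  forall I : nat -> R -> Prop,
    (forall n, is_ideal (I n)) ->
    (forall n a, I n a -> I n.+1 a) ->
    exists N, forall n, (N <= n)%N -> forall a, I n a <-> I N a.

(* A left R[x,f]-module (f = Frobenius r |-> r^p) is an R-module G together
   with the action X : G -> G of x, which is additive and satisfies
   x (r g) = (x r) g = (r^p x) g = r^p (x g).
   An element sum_i r_i x^i of R[x,f] (free left R-module on the x^i) is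
   represented by its coefficient polynomial P : {poly R} (used only as a
   coefficient sequence, NOT with the commutative polynomial product). *)
Definition frob_module (R : comNzRingType) (p : nat) (G : lmodType R)
    (X : G -> G) : Prop :=
  (forall g h : G, X (g + h) = X g + X h) /\
  (forall (r : R) (g : G), X (r *: g) = r ^+ p *: X g).

Definition skew_monomial_act (R : comNzRingType) (G : lmodType R) (X : G -> G)
    (r : R) (i : nat) (g : G) : G := r *: iter i X g.

Definition x_torsion_free (R : comNzRingType) (G : lmodType R) (X : G -> G) : Prop :=
  forall g : G, X g = 0 -> g = 0.

Definition grann (R : comNzRingType) (G : lmodType R) (X : G -> G)
    (P : {poly R}) : Prop :=
  forall (i : nat) (g : G), skew_monomial_act X P`_i i g = 0.

(* b R[x,f] = (+)_n b x^n : elements all of whose coefficients lie in b *)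
Definition graded_ext (R : comNzRingType) (b : R -> Prop) (P : {poly R}) : Prop :=
  forall i : nat, b P`_i.

(* Main.v *)
Require Import Defs.
From HB Require Import structures.
From mathcomp Require Import all_boot all_order all_algebra.
Local Open Scope ring_scope.
Import GRing.Theory.

Lemma iterX_scale (R : comNzRingType) (p : nat) (G : lmodType R) (X : G -> G) :
  frob_module p X -> forall i (r : R) (g : G),
  iter i X (r *: g) = r ^+ (p ^ i) *: iter i X g.
Proof.
move=> [_ HXs]; elim=> [|i IH] r g /=; first by rewrite expn0 expr1.
by rewrite IH HXs -exprM expnSr.
Qed.

Lemma tf_iter (R : comNzRingType) (G : lmodType R) (X : G -> G) :
  x_torsion_free X -> forall i (h : G), iter i X h = 0 -> h = 0.
Proof.
move=> tf; elim=> [|i IH] h //= H; apply: IH; exact: tf.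
Qed.

Theorem lemma1p9 (R : comNzRingType) (p : nat) (G : lmodType R) (X : G -> G) :
  prime p -> p \in [pchar R] -> noetherian_ring R ->
  frob_module p X -> x_torsion_free X ->
  exists b : R -> Prop, is_radical_ideal b /\
    (forall P : {poly R}, grann X P <-> graded_ext b P).
Proof.
move=> pp _ _ fm tf.
have key : forall (r : R) k i, (k <= p ^ i)%N ->
    (forall g, r ^+ k *: iter i X g = 0) -> forall g : G, r *: g = 0.
  move=> r k i le H g; apply: (@tf_iter _ _ X tf i).
  rewrite (@iterX_scale _ _ _ X fm) -(subnK le) exprD -scalerA H scaler0 //.
exists (fun r : R => forall g : G, r *: g = 0); split; first split.
- split.
  + by move=> g; rewrite scale0r.
  + by move=> a b Ha Hb g; rewrite scalerDl Ha Hb addr0.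
  + by move=> r a Ha g; rewrite -scalerA Ha scaler0.
- move=> a n H g; apply: (key a n.+1 n.+1) => [|h]; last exact: H.
  apply: ltnW; apply: ltn_expl; exact: prime_gt1.
- move=> P; split.
  + move=> H i g; apply: (key _ 1 i) => [|h]; first by rewrite expn_gt0 prime_gt0.
    rewrite expr1; exact: H.
  + by move=> H i g; rewrite /skew_monomial_act H.
Qed.
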